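(* In the setting of the context, there exists a unique solution $\psi$ of the initial value problem \[ \psi'\psi-\frac{\gamma+\delta}{u}\psi=-\delta\,\frac{\beta N-\beta\tilde S e^{(\beta/\gamma)\tilde R}u+\gamma\log u}{u},\quad u\in\bigl(e^{-(\beta/\gamma)\alpha},e^{-(\beta/\gamma)\tilde R}\bigr),\qquad \psi\bigl(e^{-(\beta/\gamma)\tilde R}\bigr)=\beta\tilde I, \] satisfying $\psi(u)>0$ for all $u\in\bigl(e^{-(\beta/\gamma)\alpha},e^{-(\beta/\gamma)\tilde R}\bigr]$.
   Context: Let $\beta,\gamma,\delta>0$ be constants and $\tilde S,\tilde E,\tilde I,\tilde R$ real numbers with $N:=\tilde S+\tilde E+\tilde I+\tilde R>0$. Standing assumptions: (A1) $\tilde I>0$; (A2) $\tilde E>(\gamma/\delta)\tilde I$; (A3) $\tilde S>\delta\tilde E/(\beta\tilde I)$; (A4) $\tilde R\ge 0$ and $N>\tilde S e^{(\beta/\gamma)\tilde R}+\tilde R$. Let $\alpha$ be the unique solution in $(\tilde R,N)$ of $x=N-\tilde S e^{(\beta/\gamma)\tilde R}e^{-(\beta/\gamma)x}$, and assume (A5) $\tilde S<(\gamma/\beta)e^{(\beta/\gamma)(\alpha-\tilde R)}$. *)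

(* Defs.v *)
From Stdlib Require Import Reals.
Open Scope R_scope.

Definition ivp_solution (beta gamma delta St It Rt N alpha : R) (psi : R -> R) : Prop :=
  let lo := exp (- (beta / gamma) * alpha) in
  let hi := exp (- (beta / gamma) * Rt) in
  (forall u, lo < u < hi ->
     exists d, derivable_pt_lim psi u d /\
       d * psi u - (gamma + delta) / u * psi u
       = - delta * ((beta * N - beta * St * exp ((beta / gamma) * Rt) * u
                     + gamma * ln u) / u)) /\
  limit1_in psi (fun x => lo < x <= hi) (psi hi) hi /\
  psi hi = beta * It /\
  (forall u, lo < u <= hi -> psi u > 0).

(* Main.v *)
Require Import Defs.
From Stdlib Require Import Reals.
Open Scope R_scope.
From Stdlib Require Import Lra Lia IndefiniteDescription.
From Coquelicot Require Import Coquelicot.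
Open Scope R_scope.

Lemma exp_le' x y : x <= y -> exp x <= exp y.
Proof. intros H; destruct (Rle_lt_or_eq_dec _ _ H) as [H1|H1]; [left; apply exp_increasing; auto| rewrite H1; lra]. Qed.

Lemma cont_comp_lip (F : R -> R -> R) L h s0 :
  (forall y, continuity_pt (fun t => F t y) s0) ->
  (forall t y1 y2, Rabs (F t y1 - F t y2) <= L * Rabs (y1 - y2)) -> 0 <= L ->
  continuity_pt h s0 -> continuity_pt (fun s => F s (h s)) s0.
Proof.
  intros Fc FL HL hc eps Heps.
  destruct (Fc (h s0) (eps/2)) as [a1 [Ha1 H1]]; [lra|].
  destruct (hc (eps/(2*(L+1)))) as [a2 [Ha2 H2]].
  { apply Rdiv_lt_0_compat; lra. }
  exists (Rmin a1 a2); split; [apply Rmin_pos; lra|].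
  intros x [Dx Hx]. simpl in *. unfold R_dist in *.
  assert (Hx1 : Rabs (x - s0) < a1) by (eapply Rlt_le_trans; [apply Hx| apply Rmin_l]).
  assert (Hx2 : Rabs (x - s0) < a2) by (eapply Rlt_le_trans; [apply Hx| apply Rmin_r]).
  specialize (H1 x (conj Dx Hx1)). specialize (H2 x (conj Dx Hx2)). simpl in *. unfold R_dist in *.
  replace (F x (h x) - F s0 (h s0)) with ((F x (h x) - F x (h s0)) + (F x (h s0) - F s0 (h s0))) by ring.
  eapply Rle_lt_trans; [apply Rabs_triang|].
  assert (L * Rabs (h x - h s0) <= L * (eps / (2 * (L + 1)))) by (apply Rmult_le_compat_l; lra).
  assert (L * (eps / (2 * (L + 1))) < eps/2).
  { apply (Rmult_lt_reg_r (2*(L+1))); [lra|]. field_simplify; [|lra]. nra. }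
  specialize (FL x (h x) (h s0)). lra.
Qed.

Lemma lip_deriv f f' M : (forall t, derivable_pt_lim f t (f' t)) -> (forall t, Rabs (f' t) <= M) ->
  forall s t, Rabs (f s - f t) <= M * Rabs (s - t).
Proof.
  intros Hd Hb s t.
  destruct (Rtotal_order s t) as [H|[H|H]].
  - destruct (MVT_cor2 f f' s t H (fun c _ => Hd c)) as [c [Hc _]].
    replace (f s - f t) with (- (f t - f s)) by ring. rewrite Rabs_Ropp, Hc, Rabs_mult.
    rewrite (Rabs_left (s - t)) by lra. rewrite (Rabs_right (t - s)) by lra.
    replace (- (s - t)) with (t - s) by ring. apply Rmult_le_compat_r; [lra| apply Hb].
  - subst. rewrite !Rminus_diag, Rabs_R0. lra.
  - destruct (MVT_cor2 f f' t s H (fun c _ => Hd c)) as [c [Hc _]].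
    rewrite Hc, Rabs_mult. rewrite (Rabs_right (s - t)) by lra.
    apply Rmult_le_compat_r; [lra| apply Hb].
Qed.

Lemma decr f f' p q : p <= q -> (forall c, p <= c <= q -> derivable_pt_lim f c (f' c)) ->
  (forall c, p <= c <= q -> f' c <= 0) -> f q <= f p.
Proof.
  intros Hpq Hd Hs. destruct (Rle_lt_or_eq_dec _ _ Hpq) as [H|H]; [|subst; lra].
  destruct (MVT_cor2 f f' p q H Hd) as [c [Hc Hc2]].
  assert (f' c * (q - p) <= 0). { assert (f' c <= 0) by (apply Hs; lra). nra. }
  lra.
Qed.

Lemma bound_from_deriv D D' P P' a b :
  (forall c, a <= c <= b -> derivable_pt_lim D c (D' c)) ->
  (forall c, a <= c <= b -> derivable_pt_lim P c (P' c)) ->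
  (forall c, a <= c <= b -> Rabs (D' c) <= - P' c) ->
  D b = 0 -> 0 <= P b -> forall t, a <= t <= b -> Rabs (D t) <= P t.
Proof.
  intros HD HP Hb Db Pb t Ht.
  assert (H1 : (fun x => P x - D x) b <= (fun x => P x - D x) t).
  { apply (decr (fun x => P x - D x) (fun x => P' x - D' x) t b); [lra| |].
    - intros c Hc. apply (derivable_pt_lim_minus P D); [apply HP|apply HD]; lra.
    - intros c Hc. assert (Hc' : a <= c <= b) by lra. specialize (Hb c Hc'). apply Rabs_le_between in Hb. lra. }
  assert (H2 : (fun x => P x + D x) b <= (fun x => P x + D x) t).
  { apply (decr (fun x => P x + D x) (fun x => P' x + D' x) t b); [lra| |].
    - intros c Hc. apply (derivable_pt_lim_plus P D); [apply HP|apply HD]; lra.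
    - intros c Hc. assert (Hc' : a <= c <= b) by lra. specialize (Hb c Hc'). apply Rabs_le_between in Hb. lra. }
  simpl in *. apply Rabs_le. lra.
Qed.

Fixpoint pic (F : R -> R -> R) (b y0 : R) (n : nat) : R -> R :=
  match n with
  | O => fun _ => y0
  | S k => fun t => y0 + RInt (fun s => F s (pic F b y0 k s)) b t
  end.

Lemma deriv_prim (f : R -> R) b y0 t : (forall t, continuity_pt f t) ->
  derivable_pt_lim (fun t => y0 + RInt f b t) t (f t).
Proof.
  intros Hc. apply is_derive_Reals.
  replace (f t) with (plus 0 (f t)) by (unfold plus; simpl; ring).
  apply (is_derive_plus (fun _ => y0) (fun t => RInt f b t)).
  - apply (is_derive_const (K := R_AbsRing) (V := R_NormedModule)).
  - apply is_derive_RInt with (a := b).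
    + apply filter_forall. intros x. apply (RInt_correct (V := R_CompleteNormedModule)). apply ex_RInt_continuous.
      intros z _. apply continuity_pt_filterlim. apply Hc.
    + apply continuity_pt_filterlim. apply Hc.
Qed.

Lemma deriv_cont f t l : derivable_pt_lim f t l -> continuity_pt f t.
Proof.
  intros H. apply continuity_pt_filterlim. apply (ex_derive_continuous (K := R_AbsRing) (V := R_NormedModule)).
  exists l. apply is_derive_Reals. exact H.
Qed.

Lemma dminus f g x l1 l2 : derivable_pt_lim f x l1 -> derivable_pt_lim g x l2 ->
  derivable_pt_lim (fun t => f t - g t) x (l1 - l2).
Proof. exact (derivable_pt_lim_minus f g x l1 l2). Qed.

Lemma small2 K eps : 0 <= K -> 0 < eps -> exists N, forall n, (n >= N)%nat -> 2*K*(/2)^n < eps.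
Proof.
  intros HK He. set (e' := eps / (2*K+1)).
  assert (He' : 0 < e') by (unfold e'; apply Rdiv_lt_0_compat; lra).
  destruct (pow_lt_1_zero (/2) ltac:(rewrite Rabs_right; lra) e' He') as [N HN].
  exists N. intros n Hn. specialize (HN n Hn). rewrite Rabs_right in HN by (apply Rle_ge, pow_le; lra).
  assert (Hee : (2*K+1) * e' = eps) by (unfold e'; field; lra).
  assert (0 <= (/2)^n) by (apply pow_le; lra). nra.
Qed.

Lemma picard (F : R -> R -> R) a b y0 L B :
  a < b -> 0 <= L -> 0 <= B ->
  (forall y t, continuity_pt (fun t => F t y) t) ->
  (forall t y1 y2, Rabs (F t y1 - F t y2) <= L * Rabs (y1 - y2)) ->
  (forall t y, Rabs (F t y) <= B) ->
  exists y : R -> R, y b = y0 /\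
    (forall t, a < t < b -> derivable_pt_lim y t (F t (y t))) /\
    (forall s t, a <= s <= b -> a <= t <= b -> Rabs (y s - y t) <= B * Rabs (s - t)).
Proof.
  intros Hab HL HB Fc FL FB.
  set (p := pic F b y0).
  assert (Hc : forall n t, continuity_pt (p n) t).
  { induction n; intros t.
    - apply (deriv_cont _ _ 0). apply derivable_pt_lim_const.
    - apply (deriv_cont _ _ (F t (p n t))).
      exact (deriv_prim (fun s => F s (p n s)) b y0 t
        (fun s => cont_comp_lip F L (p n) s (fun y => Fc y s) FL HL (IHn s))). }
  assert (Hd : forall n t, derivable_pt_lim (p (S n)) t (F t (p n t))).
  { intros n t. exact (deriv_prim (fun s => F s (p n s)) b y0 t
        (fun s => cont_comp_lip F L (p n) s (fun y => Fc y s) FL HL (Hc n s))). }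
  assert (Hb : forall n, p n b = y0).
  { destruct n; unfold p; simpl; [auto|]. rewrite (RInt_point (V := R_CompleteNormedModule)). unfold zero; simpl; ring. }
  assert (Hlip : forall n s t, Rabs (p n s - p n t) <= B * Rabs (s - t)).
  { destruct n; intros s t.
    - simpl. rewrite Rminus_diag, Rabs_R0. apply Rmult_le_pos; auto using Rabs_pos.
    - apply lip_deriv with (f' := fun t => F t (p n t)); auto. }
  set (phi := fun t => exp (2*L*(b-t))).
  assert (Hphi : forall t, derivable_pt_lim phi t (phi t * - (2*L))).
  { intros t. apply is_derive_Reals. unfold phi. auto_derive; [auto| unfold Rminus; ring]. }
  assert (Hphi1 : forall t, t <= b -> 1 <= phi t).
  { intros t Ht. unfold phi. pose proof (exp_ineq1_le (2*L*(b-t))).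
    assert (0 <= 2*L*(b-t)) by (apply Rmult_le_pos; lra). lra. }
  set (C := B*(b-a)).
  assert (HC : 0 <= C) by (unfold C; apply Rmult_le_pos; lra).
  assert (Hest : forall n t, a <= t <= b -> Rabs (p (S n) t - p n t) <= C * (/2)^n * phi t).
  { induction n.
    - intros t Ht.
      assert (H := bound_from_deriv (fun t => p 1%nat t - p 0%nat t) (fun t => F t y0 - 0)
                  (fun t => B*(b-t)) (fun _ => -B) a b).
      assert (Hr : Rabs (p 1%nat t - p 0%nat t) <= B*(b-t)).
      { apply H; auto.
        - intros c _. apply dminus; [apply (Hd 0%nat)| apply derivable_pt_lim_const].
        - intros c _. apply is_derive_Reals. auto_derive; auto; ring.
        - intros c _. rewrite Rminus_0_r. rewrite Ropp_involutive. apply FB.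
        - cbv beta. rewrite (Hb 1%nat), (Hb 0%nat). ring.
        - lra. }
      simpl pow. specialize (Hphi1 t (proj2 Ht)). unfold C.
      assert (B*(b-t) <= B*(b-a)) by (apply Rmult_le_compat_l; lra).
      assert (B*(b-a) <= B*(b-a)*phi t).
      { rewrite <- (Rmult_1_r (B*(b-a))) at 1. apply Rmult_le_compat_l; [apply Rmult_le_pos; lra| lra]. }
      lra.
    - intros t Ht.
      apply (bound_from_deriv (fun t => p (S (S n)) t - p (S n) t)
               (fun t => F t (p (S n) t) - F t (p n t))
               (fun t => C * (/2)^(S n) * phi t) (fun t => C * (/2)^(S n) * (phi t * - (2*L))) a b); auto.
      + intros c _. apply dminus; apply Hd.
      + intros c _. apply is_derive_Reals. apply is_derive_scal. apply is_derive_Reals. apply Hphi.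
      + intros c Hc'. eapply Rle_trans; [apply FL|].
        specialize (IHn c Hc').
        assert (L * Rabs (p (S n) c - p n c) <= L * (C * (/2)^n * phi c)) by (apply Rmult_le_compat_l; lra).
        replace (- (C * (/ 2) ^ S n * (phi c * - (2 * L)))) with (L * (C * (/ 2) ^ n * phi c))
          by (simpl; field). lra.
      + simpl. rewrite !Hb. ring.
      + apply Rmult_le_pos; [apply Rmult_le_pos; [auto| apply pow_le; lra]|].
        unfold phi; left; apply exp_pos. }
  set (K := C * exp (2*L*(b-a))).
  assert (HK : 0 <= K) by (unfold K; apply Rmult_le_pos; [auto| left; apply exp_pos]).
  assert (Hest2 : forall n t, a <= t <= b -> Rabs (p (S n) t - p n t) <= K * (/2)^n).
  { intros n t Ht. eapply Rle_trans; [apply Hest; auto|].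
    unfold K, phi. replace (C * exp (2 * L * (b - a)) * (/ 2) ^ n) with (C * (/2)^n * exp (2 * L * (b - a))) by ring.
    apply Rmult_le_compat_l; [apply Rmult_le_pos; [auto| apply pow_le; lra]|].
    apply exp_le'. apply Rmult_le_compat_l; lra. }
  assert (Hcau : forall n k t, a <= t <= b -> Rabs (p (n+k)%nat t - p n t) <= 2*K*(/2)^n*(1 - (/2)^k)).
  { intros n k t Ht. induction k.
    - rewrite Nat.add_0_r, Rminus_diag, Rabs_R0. simpl. lra.
    - rewrite Nat.add_succ_r.
      replace (p (S (n + k)) t - p n t) with ((p (S (n + k)) t - p (n+k)%nat t) + (p (n+k)%nat t - p n t)) by ring.
      eapply Rle_trans; [apply Rabs_triang|].
      pose proof (Hest2 (n+k)%nat t Ht). rewrite pow_add in H.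
      replace (2 * K * (/ 2) ^ n * (1 - (/ 2) ^ S k)) with (K * ((/2)^n * (/2)^k) + 2 * K * (/ 2) ^ n * (1 - (/ 2) ^ k))
        by (simpl; field). lra. }
  assert (Hcau2 : forall n k t, a <= t <= b -> Rabs (p (n+k)%nat t - p n t) <= 2*K*(/2)^n).
  { intros n k t Ht. eapply Rle_trans; [apply Hcau; auto|].
    assert (0 <= (/2)^k) by (apply pow_le; lra). assert (0 <= (/2)^n) by (apply pow_le; lra).
    assert (0 <= 2*K*(/2)^n) by (apply Rmult_le_pos; lra). nra. }
  assert (Hex : forall t, a <= t <= b -> ex_finite_lim_seq (fun n => p n t)).
  { intros t Ht. apply ex_lim_seq_cauchy_corr. intros eps.
    destruct (small2 K eps HK (cond_pos eps)) as [N HN]. exists N. intros n m Hn Hm.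
    destruct (Nat.le_ge_cases n m) as [Hnm|Hnm].
    - replace m with (n + (m - n))%nat by lia. rewrite Rabs_minus_sym.
      eapply Rle_lt_trans; [apply Hcau2; auto| apply HN; lia].
    - replace n with (m + (n - m))%nat by lia.
      eapply Rle_lt_trans; [apply Hcau2; auto| apply HN; lia]. }
  set (y := fun t => real (Lim_seq (fun n => p n t))).
  assert (Hlim : forall t, a <= t <= b -> is_lim_seq (fun n => p n t) (y t)).
  { intros t Ht. destruct (Hex t Ht) as [l Hl]. unfold y. rewrite (is_lim_seq_unique _ _ Hl). simpl. exact Hl. }
  assert (Hyb : forall n t, a <= t <= b -> Rabs (y t - p n t) <= 2*K*(/2)^n).
  { intros n t Ht. apply Rle_plus_epsilon. intros eps Heps.
    pose proof (proj1 (is_lim_seq_Reals _ _) (Hlim t Ht) eps Heps) as [M HM].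
    specialize (HM (n + M)%nat ltac:(lia)). unfold R_dist in HM.
    replace (y t - p n t) with ((y t - p (n+M)%nat t) + (p (n+M)%nat t - p n t)) by ring.
    eapply Rle_trans; [apply Rabs_triang|]. rewrite Rabs_minus_sym in HM.
    pose proof (Hcau2 n M t Ht). lra. }
  exists y. split; [|split].
  - assert (Hab' : a <= b <= b) by lra.
    assert (H0 : Rabs (y b - y0) <= 0).
    { apply Rle_plus_epsilon. intros eps Heps. destruct (small2 K eps HK Heps) as [N HN].
      specialize (HN N (le_n _)). specialize (Hyb N b Hab'). rewrite Hb in Hyb. lra. }
    pose proof (Rabs_pos (y b - y0)). assert (Rabs (y b - y0) = 0) by lra.
    apply Rabs_eq_0 in H1. lra.
  - intros t Ht.
    assert (Hr : 0 < (b - a)/2) by lra.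
    assert (HBo : forall x, Boule ((a+b)/2) (mkposreal _ Hr) x -> a < x < b).
    { intros x Hx. unfold Boule in Hx. simpl in Hx. apply Rabs_def2 in Hx. lra. }
    apply (CVU_derivable (fun n => p (S n)) (fun n t => F t (p n t)) y (fun t => F t (y t))
             ((a+b)/2) (mkposreal _ Hr)).
    + intros eps Heps. assert (HLK : 0 <= L*K) by (apply Rmult_le_pos; auto).
      destruct (small2 (L*K) eps HLK Heps) as [N HN]. exists N. intros n x Hn Hx.
      apply HBo in Hx. eapply Rle_lt_trans; [apply FL|].
      assert (L * Rabs (y x - p n x) <= L * (2*K*(/2)^n)) by (apply Rmult_le_compat_l; [auto| apply Hyb; lra]).
      specialize (HN n Hn). lra.
    + intros x Hx. apply HBo in Hx. intros eps Heps. destruct (small2 K eps HK Heps) as [N HN].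
      exists N. intros n Hn. unfold R_dist. rewrite Rabs_minus_sym.
      eapply Rle_lt_trans; [apply Hyb; lra| apply HN; lia].
    + intros n x _. apply Hd.
    + unfold Boule; simpl. apply Rabs_def1; lra.
  - intros s t Hs Ht. apply Rle_plus_epsilon. intros eps Heps.
    destruct (small2 K (eps/2) HK ltac:(lra)) as [N HN]. specialize (HN N (le_n _)).
    replace (y s - y t) with ((y s - p N s) + ((p N s - p N t) + (p N t - y t))) by ring.
    eapply Rle_trans; [apply Rabs_triang|].
    eapply Rle_trans; [apply Rplus_le_compat_l; apply Rabs_triang|].
    pose proof (Hyb N s Hs). pose proof (Hyb N t Ht). rewrite Rabs_minus_sym in H0.
    pose proof (Hlip N s t). lra.
Qed.

Lemma hcont (g : R -> R) k1 k2 M u : 0 < u -> 0 < M -> continuity_pt g u ->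
  continuity_pt (fun v => k1 / v - k2 * g v / (v * M)) u.
Proof.
  intros Hu HM Hg.
  apply continuity_pt_minus.
  - apply continuity_pt_div. apply continuity_pt_const. intros x y; auto. apply derivable_continuous_pt, derivable_pt_id. lra.
  - apply continuity_pt_div. apply continuity_pt_mult. apply continuity_pt_const. intros x y; auto. auto.
    apply continuity_pt_mult. apply derivable_continuous_pt, derivable_pt_id. apply continuity_pt_const. intros x y; auto.
    apply Rgt_not_eq. unfold mult_fct, id, fct_cte. nra.
Qed.

Lemma loclip_cont (z : R -> R) c r B : 0 < r -> 0 <= B ->
  (forall s, Rabs (s - c) < r -> Rabs (z s - z c) <= B * Rabs (s - c)) -> continuity_pt z c.
Proof.
  intros Hr HB H eps Heps. exists (Rmin r (eps/(B+1))). split.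
  { apply Rmin_pos; [lra| apply Rdiv_lt_0_compat; lra]. }
  intros x [_ Hx]. simpl in *. unfold R_dist in *.
  assert (Hx1 : Rabs (x - c) < r) by (eapply Rlt_le_trans; [apply Hx| apply Rmin_l]).
  assert (Hx2 : Rabs (x - c) < eps/(B+1)) by (eapply Rlt_le_trans; [apply Hx| apply Rmin_r]).
  specialize (H x Hx1).
  assert (B * Rabs (x - c) <= B * (eps/(B+1))) by (apply Rmult_le_compat_l; lra).
  assert (B * (eps/(B+1)) < eps).
  { assert (Hee : (B+1) * (eps/(B+1)) = eps) by (field; lra).
    assert (0 < eps/(B+1)) by (apply Rdiv_lt_0_compat; lra). nra. }
  lra.
Qed.

Lemma Rmax_lip m y1 y2 : Rabs (Rmax m y1 - Rmax m y2) <= Rabs (y1 - y2).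
Proof.
  unfold Rmax; destruct (Rle_dec m y1); destruct (Rle_dec m y2);
  apply Rabs_le; pose proof (Rabs_pos (y1 - y2)); pose proof (Rle_abs (y1 - y2));
  pose proof (Rle_abs (-(y1 - y2))); rewrite Rabs_Ropp in *; lra.
Qed.

Lemma clamp_lip a' hi s t : Rabs (Rmax a' (Rmin hi s) - Rmax a' (Rmin hi t)) <= Rabs (s - t).
Proof.
  eapply Rle_trans; [apply Rmax_lip|].
  unfold Rmin; destruct (Rle_dec hi s); destruct (Rle_dec hi t);
  apply Rabs_le; pose proof (Rabs_pos (s - t)); pose proof (Rle_abs (s - t));
  pose proof (Rle_abs (-(s - t))); rewrite Rabs_Ropp in *; lra.
Qed.

Lemma neg_deriv f x d : derivable_pt_lim f x d -> d < 0 -> forall r, 0 < r ->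
  exists h, 0 < h < r /\ f (x + h) < f x.
Proof.
  intros Hd Hneg r Hr. destruct (Hd (-d/2)) as [del Hdel]; [lra|].
  set (h := Rmin (del/2) (r/2)).
  assert (Hh : 0 < h) by (apply Rmin_pos; [destruct del; simpl; lra| lra]).
  assert (Hh2 : h <= del/2) by apply Rmin_l. assert (Hh3 : h <= r/2) by apply Rmin_r.
  exists h. split; [lra|].
  assert (Hdp : 0 < del) by (destruct del; auto).
  specialize (Hdel h ltac:(lra) ltac:(rewrite Rabs_right; lra)).
  apply Rabs_def2 in Hdel. destruct Hdel as [H1 _].
  assert (Hq : (f (x + h) - f x) / h < d/2) by lra.
  assert (f (x + h) - f x < h * (d/2)).
  { apply (Rmult_lt_compat_l h) in Hq; [|lra]. replace (h * ((f (x + h) - f x) / h)) with (f (x + h) - f x) in Hq by (field; lra). lra. }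
  nra.
Qed.

Definition odeF (k1 k2 : R) (g : R -> R) (t y : R) := k1 / t - k2 * g t / (t * y).

Lemma exist_a (lo hi k1 k2 Y0 : R) (g : R -> R) (a : R) :
  0 < lo -> lo < a -> a < hi -> 0 < k1 -> 0 < k2 -> 0 < Y0 ->
  (forall u, 0 < u -> continuity_pt g u) ->
  (forall p, lo < p < hi -> exists c G, 0 < c /\ forall u, p <= u <= hi -> c <= g u <= G) ->
  exists f : R -> R, exists B, 0 <= B /\ f hi = Y0 /\ (forall t, a <= t <= hi -> 0 < f t) /\
    (forall t, a <= t < hi -> derivable_pt_lim f t (odeF k1 k2 g t (f t))) /\
    (forall s t, a <= s <= hi -> a <= t <= hi -> Rabs (f s - f t) <= B * Rabs (s - t)).
Proof.
  intros Hlo Hla Hah Hk1 Hk2 HY0 gc gb.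
  set (a' := (lo + a)/2).
  destruct (gb a' ltac:(unfold a'; lra)) as [c [G [Hc HcG]]].
  assert (HG : c <= G) by (destruct (HcG hi ltac:(unfold a'; lra)); lra).
  set (m := Rmin Y0 (k2*c/k1) / 2).
  assert (Hm0 : 0 < Rmin Y0 (k2*c/k1)) by (apply Rmin_pos; [lra| apply Rdiv_lt_0_compat; nra]).
  assert (Hm : 0 < m) by (unfold m; lra).
  assert (HmY : m < Y0) by (unfold m; pose proof (Rmin_l Y0 (k2*c/k1)); lra).
  assert (Hmc : k1 * m < k2 * c).
  { unfold m. pose proof (Rmin_r Y0 (k2*c/k1)).
    assert (k1 * (k2*c/k1) = k2 * c) by (field; lra). nra. }
  assert (Ha' : 0 < a') by (unfold a'; lra).
  set (ct := fun t => Rmax a' (Rmin hi t)).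
  assert (Hct : forall t, a' <= ct t <= hi).
  { intros t. unfold ct. split; [apply Rmax_l|]. apply Rmax_lub; [unfold a'; lra| apply Rmin_l]. }
  assert (Hcti : forall t, a' <= t <= hi -> ct t = t).
  { intros t Ht. unfold ct. rewrite Rmin_right by lra. apply Rmax_right; lra. }
  set (Ft := fun t y => k1 / ct t - k2 * g (ct t) / (ct t * Rmax m y)).
  set (L := (k2 * G / a') * (/ (m * m))).
  set (B := k1 / a' + k2 * G / (a' * m)).
  assert (HG0 : 0 < G) by lra.
  assert (HL : 0 <= L) by (unfold L; apply Rmult_le_pos; [left; apply Rdiv_lt_0_compat; nra | left; apply Rinv_0_lt_compat; nra]).
  assert (HB : 0 <= B).
  { unfold B. assert (0 < k1/a') by (apply Rdiv_lt_0_compat; lra).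
    assert (0 < k2 * G / (a' * m)) by (apply Rdiv_lt_0_compat; nra). lra. }
  assert (HRm : forall y, m <= Rmax m y) by (intros; apply Rmax_l).
  destruct (picard Ft a' hi Y0 L B) as [y [Hyb [Hyd Hyl]]]; auto.
  - unfold a'; lra.
  - intros y0 t. unfold Ft.
    change (continuity_pt (comp (fun v => k1 / v - k2 * g v / (v * Rmax m y0)) ct) t).
    apply continuity_pt_comp.
    + apply (loclip_cont _ _ 1 1); try lra. intros s _. rewrite Rmult_1_l. apply clamp_lip.
    + apply hcont. specialize (Hct t); lra. specialize (HRm y0); lra. apply gc. specialize (Hct t); lra.
  - intros t y1 y2. unfold Ft. set (u := ct t). set (M1 := Rmax m y1). set (M2 := Rmax m y2).
    assert (Hu : a' <= u <= hi) by apply Hct.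
    assert (HM1 : m <= M1) by apply HRm. assert (HM2 : m <= M2) by apply HRm.
    destruct (HcG u ltac:(lra)) as [Hgu1 Hgu2].
    replace (k1 / u - k2 * g u / (u * M1) - (k1 / u - k2 * g u / (u * M2)))
      with ((k2 * g u / u) * ((M1 - M2) * / (M1 * M2))) by (field; repeat split; lra).
    rewrite (Rabs_mult (k2 * g u / u)). unfold L.
    replace (k2 * G / a' * / (m * m) * Rabs (y1 - y2)) with ((k2 * G / a') * (Rabs (y1 - y2) * / (m*m))) by ring.
    apply Rmult_le_compat; try apply Rabs_pos.
    + rewrite Rabs_right. 
      * unfold Rdiv. apply Rmult_le_compat; try (left; apply Rinv_0_lt_compat; lra).
        nra. nra. apply Rinv_le_contravar; lra.
      * apply Rle_ge. unfold Rdiv. apply Rmult_le_pos; [nra| left; apply Rinv_0_lt_compat; lra].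
    + rewrite Rabs_mult. apply Rmult_le_compat; try apply Rabs_pos. apply Rmax_lip.
      rewrite Rabs_right by (left; apply Rinv_0_lt_compat; nra).
      apply Rinv_le_contravar; nra.
  - intros t y0. unfold Ft. set (u := ct t). set (M := Rmax m y0).
    assert (Hu : a' <= u <= hi) by apply Hct. assert (HM : m <= M) by apply HRm.
    destruct (HcG u ltac:(lra)) as [Hgu1 Hgu2].
    assert (H1 : 0 <= k1 / u <= k1 / a').
    { split. left; apply Rdiv_lt_0_compat; lra. unfold Rdiv. apply Rmult_le_compat_l; [lra|]. apply Rinv_le_contravar; lra. }
    assert (H2 : 0 <= k2 * g u / (u * M) <= k2 * G / (a' * m)).
    { split. left; apply Rdiv_lt_0_compat; nra. unfold Rdiv. apply Rmult_le_compat; try nra.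
      left; apply Rinv_0_lt_compat; nra. apply Rinv_le_contravar; nra. }
    unfold B. apply Rabs_le. lra.
  -
    assert (Hbar : forall t, a <= t <= hi -> m <= y t).
    { set (z := fun t => y (Rmin hi t)).
      assert (Hzc : forall c0, a <= c0 <= hi -> continuity_pt z c0).
      { intros c0 Hc0. apply (loclip_cont _ _ (c0 - a') B); [unfold a'; lra| auto|].
        intros s Hs. apply Rabs_def2 in Hs. unfold z.
        eapply Rle_trans; [apply Hyl|].
        - unfold Rmin; destruct (Rle_dec hi s); lra.
        - unfold Rmin; destruct (Rle_dec hi c0); lra.
        - apply Rmult_le_compat_l; [auto|]. 
          unfold Rmin; destruct (Rle_dec hi s); destruct (Rle_dec hi c0);
          apply Rabs_le; pose proof (Rabs_pos (s - c0)); pose proof (Rle_abs (s - c0));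
          pose proof (Rle_abs (-(s - c0))); rewrite Rabs_Ropp in *; lra. }
      destruct (continuity_ab_min z a hi ltac:(lra) Hzc) as [ts [Hmin Hts]].
      assert (Hzi : forall t, t <= hi -> z t = y t) by (intros t Ht; unfold z, Rmin; destruct (Rle_dec hi t); [replace t with hi by lra|]; auto).
      assert (Hyts : m <= y ts).
      { destruct (Rle_lt_dec m (y ts)) as [Hle|Hlt]; auto. exfalso.
        assert (Htsh : ts < hi).
        { destruct (Rle_lt_or_eq_dec ts hi (proj2 Hts)) as [H|H]; auto. subst ts. lra. }
        assert (Hd := Hyd ts ltac:(unfold a'; lra)).
        assert (Hneg : Ft ts (y ts) < 0).
        { unfold Ft. rewrite Hcti by (unfold a'; lra).
          rewrite Rmax_left by lra.
          destruct (HcG ts ltac:(unfold a'; lra)) as [Hg1 _].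
          assert (Hts0 : 0 < ts) by (unfold a' in *; lra).
          replace (k1 / ts - k2 * g ts / (ts * m)) with ((k1 * m - k2 * g ts) / (ts * m)) by (field; lra).
          unfold Rdiv. assert (0 < / (ts * m)) by (apply Rinv_0_lt_compat; nra).
          assert (k1 * m - k2 * g ts < 0) by nra. nra. }
        destruct (neg_deriv y ts _ Hd Hneg (hi - ts) ltac:(lra)) as [h [Hh Hyh]].
        specialize (Hmin (ts + h) ltac:(lra)).
        rewrite !Hzi in Hmin by lra. lra. }
      intros t Ht. specialize (Hmin t Ht). rewrite !Hzi in Hmin by lra. lra. }
    exists y, B. split; [auto| split; [auto| split; [| split]]].
    + intros t Ht. specialize (Hbar t Ht). lra.
    + intros t Ht. assert (Hd := Hyd t ltac:(unfold a'; lra)).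
      unfold Ft in Hd. rewrite Hcti in Hd by (unfold a'; lra).
      rewrite Rmax_right in Hd by (apply Hbar; lra). exact Hd.
    + intros s t Hs Ht. apply Hyl; unfold a'; lra.
Qed.

Lemma uniq (k1 k2 Y0 hi c : R) (g : R -> R) (f1 f2 : R -> R) :
  0 <= k2 -> c <= hi -> (forall u, c <= u < hi -> 0 < u /\ 0 <= g u) ->
  (forall t, c <= t < hi -> derivable_pt_lim f1 t (odeF k1 k2 g t (f1 t))) ->
  (forall t, c <= t < hi -> derivable_pt_lim f2 t (odeF k1 k2 g t (f2 t))) ->
  (forall t, c <= t <= hi -> 0 < f1 t) -> (forall t, c <= t <= hi -> 0 < f2 t) ->
  f1 hi = Y0 -> f2 hi = Y0 ->
  (forall e, 0 < e -> exists eta, 0 < eta /\ forall s, c <= s < hi -> hi - s < eta -> Rabs (f1 s - Y0) < e) ->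
  (forall e, 0 < e -> exists eta, 0 < eta /\ forall s, c <= s < hi -> hi - s < eta -> Rabs (f2 s - Y0) < e) ->
  forall t, c <= t <= hi -> f1 t = f2 t.
Proof.
  intros Hk2 Hc Hg D1 D2 P1 P2 E1 E2 L1 L2 t Ht.
  destruct (Rle_lt_or_eq_dec t hi (proj2 Ht)) as [Hlt|Heq]; [| subst; congruence].
  set (F1 := fun x => odeF k1 k2 g x (f1 x)). set (F2 := fun x => odeF k1 k2 g x (f2 x)).
  set (W := fun x => (f1 x - f2 x) * (f1 x - f2 x)).
  assert (HW : forall s, t <= s < hi -> W t <= W s).
  { intros s Hs. destruct (Rle_lt_or_eq_dec t s (proj1 Hs)) as [Hts|Hts]; [|subst; lra].
    assert (H := decr (fun x => - W x)
      (fun x => - ((F1 x - F2 x) * (f1 x - f2 x) + (f1 x - f2 x) * (F1 x - F2 x))) t s (proj1 Hs)).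
    cbv beta in H. enough (- W s <= - W t) by lra. apply H.
    - intros x Hx.
      pose proof (derivable_pt_lim_mult _ _ x _ _ (dminus f1 f2 x _ _ (D1 x ltac:(lra)) (D2 x ltac:(lra)))
                    (dminus f1 f2 x _ _ (D1 x ltac:(lra)) (D2 x ltac:(lra)))) as H1.
      pose proof (derivable_pt_lim_opp _ x _ H1) as H2. exact H2.
    - intros x Hx. destruct (Hg x ltac:(lra)) as [Hx0 Hgx].
      assert (Hp1 : 0 < f1 x) by (apply P1; lra). assert (Hp2 : 0 < f2 x) by (apply P2; lra).
      assert (Heq : F1 x - F2 x = (k2 * g x * / (x * f1 x * f2 x)) * (f1 x - f2 x)).
      { unfold F1, F2, odeF. field. repeat split; lra. }
      rewrite Heq.
      assert (0 <= k2 * g x * / (x * f1 x * f2 x)).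
      { apply Rmult_le_pos; [nra| left; apply Rinv_0_lt_compat; apply Rmult_lt_0_compat; nra]. }
      assert (0 <= (f1 x - f2 x) * (f1 x - f2 x)) by (pose proof (Rle_0_sqr (f1 x - f2 x)); unfold Rsqr in *; lra).
      nra. }
  assert (HW0 : W t <= 0).
  { apply Rle_plus_epsilon. intros eps Heps.
    set (e := Rmin 1 (eps/8)).
    assert (He : 0 < e) by (apply Rmin_pos; lra).
    assert (He1 : e <= 1) by apply Rmin_l. assert (He2 : e <= eps/8) by apply Rmin_r.
    destruct (L1 e He) as [n1 [Hn1 H1]]. destruct (L2 e He) as [n2 [Hn2 H2]].
    set (s := hi - Rmin (Rmin n1 n2 / 2) ((hi - t)/2)).
    assert (Hn : 0 < Rmin n1 n2) by (apply Rmin_pos; lra).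
    assert (Hs1 : Rmin (Rmin n1 n2 / 2) ((hi - t)/2) <= Rmin n1 n2 / 2) by apply Rmin_l.
    assert (Hs2 : Rmin (Rmin n1 n2 / 2) ((hi - t)/2) <= (hi - t)/2) by apply Rmin_r.
    assert (Hs3 : 0 < Rmin (Rmin n1 n2 / 2) ((hi - t)/2)) by (apply Rmin_pos; lra).
    pose proof (Rmin_l n1 n2). pose proof (Rmin_r n1 n2).
    specialize (H1 s ltac:(unfold s; lra) ltac:(unfold s; lra)).
    specialize (H2 s ltac:(unfold s; lra) ltac:(unfold s; lra)).
    specialize (HW s ltac:(unfold s; lra)).
    apply Rabs_def2 in H1. apply Rabs_def2 in H2. unfold W in HW |- *.
    assert ((f1 s - f2 s) * (f1 s - f2 s) <= 4 * e * e) by nra.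
    nra. }
  unfold W in HW0. nra.
Qed.

Definition gg (beta gamma St Rt N u : R) :=
  beta * N - beta * St * exp ((beta / gamma) * Rt) * u + gamma * ln u.

Lemma ln_concave p q u : 0 < p -> p <= u <= q ->
  (q - u) * ln p + (u - p) * ln q <= (q - p) * ln u.
Proof.
  intros Hp Hu.
  assert (Hu0 : 0 < u) by lra.
  assert (H1 : ln p - ln u <= p / u - 1).
  { rewrite <- ln_div by lra. pose proof (exp_ineq1_le (ln (p/u))).
    rewrite exp_ln in H by (apply Rdiv_lt_0_compat; lra). lra. }
  assert (H2 : ln q - ln u <= q / u - 1).
  { rewrite <- ln_div by lra. pose proof (exp_ineq1_le (ln (q/u))).
    rewrite exp_ln in H by (apply Rdiv_lt_0_compat; lra). lra. }
  assert (H3 : (q - u) * (ln p - ln u) <= (q - u) * (p / u - 1)) by (apply Rmult_le_compat_l; lra).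
  assert (H4 : (u - p) * (ln q - ln u) <= (u - p) * (q / u - 1)) by (apply Rmult_le_compat_l; lra).
  assert (H5 : (q - u) * (p / u - 1) + (u - p) * (q / u - 1) = 0) by (field; lra).
  nra.
Qed.

Lemma gg_concave beta gamma St Rt N p q u : 0 < gamma -> 0 < p -> p <= u <= q ->
  (q - u) * gg beta gamma St Rt N p + (u - p) * gg beta gamma St Rt N q <= (q - p) * gg beta gamma St Rt N u.
Proof.
  intros Hg Hp Hu. pose proof (ln_concave p q u Hp Hu). unfold gg.
  assert (gamma * ((q - u) * ln p + (u - p) * ln q) <= gamma * ((q - p) * ln u)) by (apply Rmult_le_compat_l; lra).
  nra.
Qed.

Theorem lemma8 (beta gamma delta St Et It Rt alpha : R)
  (hbeta : 0 < beta) (hgamma : 0 < gamma) (hdelta : 0 < delta)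
  (hN : 0 < St + Et + It + Rt)
  (A1 : 0 < It)
  (A2 : Et > (gamma / delta) * It)
  (A3 : St > delta * Et / (beta * It))
  (A4a : 0 <= Rt)
  (A4b : St + Et + It + Rt > St * exp ((beta / gamma) * Rt) + Rt)
  (halpha_int : Rt < alpha < St + Et + It + Rt)
  (halpha_eq : alpha = (St + Et + It + Rt)
                 - St * exp ((beta / gamma) * Rt) * exp (- (beta / gamma) * alpha))
  (A5 : St < (gamma / beta) * exp ((beta / gamma) * (alpha - Rt))) :
  exists psi : R -> R,
    ivp_solution beta gamma delta St It Rt (St + Et + It + Rt) alpha psi /\
    forall phi : R -> R,
      ivp_solution beta gamma delta St It Rt (St + Et + It + Rt) alpha phi ->
      forall u, exp (- (beta / gamma) * alpha) < u <= exp (- (beta / gamma) * Rt) ->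
        phi u = psi u.
Proof.
  set (lo := exp (- (beta / gamma) * alpha)).
  set (hi := exp (- (beta / gamma) * Rt)).
  set (g := gg beta gamma St Rt (St + Et + It + Rt)).
  assert (HEt : 0 < Et).
  { assert (0 < gamma / delta * It) by (apply Rmult_lt_0_compat; [apply Rdiv_lt_0_compat|]; lra). lra. }
  assert (HSt : 0 < St).
  { assert (0 < delta * Et / (beta * It)) by (apply Rdiv_lt_0_compat; nra). lra. }
  assert (Hlo : 0 < lo) by apply exp_pos.
  assert (Hlohi : lo < hi).
  { apply exp_increasing. assert (0 < beta / gamma) by (apply Rdiv_lt_0_compat; lra). nra. }
  assert (Hglo : g lo = 0).
  { unfold g, gg, lo. rewrite ln_exp.
    assert (Hm : beta * St * exp (beta / gamma * Rt) * exp (- (beta / gamma) * alpha)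
              = beta * (St * exp (beta / gamma * Rt) * exp (- (beta / gamma) * alpha))) by ring.
    rewrite Hm. replace (St * exp (beta / gamma * Rt) * exp (- (beta / gamma) * alpha))
      with ((St + Et + It + Rt) - alpha) by lra. field. lra. }
  assert (Hghi : g hi = beta * (Et + It)).
  { unfold g, gg, hi. rewrite ln_exp.
    replace (beta * St * exp (beta / gamma * Rt) * exp (- (beta / gamma) * Rt))
      with (beta * St * (exp (beta / gamma * Rt) * exp (- (beta / gamma) * Rt))) by ring.
    rewrite <- exp_plus. replace (beta / gamma * Rt + - (beta / gamma) * Rt) with 0 by ring.
    rewrite exp_0. field. lra. }
  assert (Hghi0 : 0 < g hi) by (rewrite Hghi; nra).
  assert (Hgpos : forall u, lo < u <= hi -> 0 < g u).
  { intros u Hu. pose proof (gg_concave beta gamma St Rt (St + Et + It + Rt) lo hi u hgamma Hlo ltac:(lra)).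
    fold g in H. rewrite Hglo in H. assert (0 < (u - lo) * g hi) by (apply Rmult_lt_0_compat; lra). nra. }
  assert (Hgc : forall u, 0 < u -> continuity_pt g u).
  { intros u Hu. apply (deriv_cont _ _ (- (beta * St * exp (beta / gamma * Rt)) + gamma / u)).
    apply is_derive_Reals. unfold g, gg. auto_derive; [auto| field; lra]. }
  assert (Hgb : forall p, lo < p < hi -> exists c G, 0 < c /\ forall u, p <= u <= hi -> c <= g u <= G).
  { intros p Hp. exists (Rmin (g p) (g hi)), (beta * (St + Et + It + Rt) + gamma * Rabs (ln hi)). split.
    - apply Rmin_pos; [apply Hgpos; lra| auto].
    - intros u Hu. split.
      + pose proof (gg_concave beta gamma St Rt (St + Et + It + Rt) p hi u hgamma ltac:(lra) Hu). fold g in H.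
        pose proof (Rmin_l (g p) (g hi)). pose proof (Rmin_r (g p) (g hi)).
        assert ((hi - u) * Rmin (g p) (g hi) <= (hi - u) * g p) by (apply Rmult_le_compat_l; lra).
        assert ((u - p) * Rmin (g p) (g hi) <= (u - p) * g hi) by (apply Rmult_le_compat_l; lra).
        nra.
      + unfold g, gg. assert (0 <= beta * St * exp (beta / gamma * Rt) * u).
        { repeat apply Rmult_le_pos; try lra. left; apply exp_pos. }
        assert (ln u <= Rabs (ln hi)) by (eapply Rle_trans; [apply (ln_le u hi); lra| apply Rle_abs]).
        assert (gamma * ln u <= gamma * Rabs (ln hi)) by (apply Rmult_le_compat_l; lra).
        lra. }
  set (k1 := gamma + delta). set (Y0 := beta * It).
  assert (HY0 : 0 < Y0) by (unfold Y0; nra).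
  assert (Hex : forall a, exists f : R -> R, lo < a < hi ->
    exists B, 0 <= B /\ f hi = Y0 /\ (forall t, a <= t <= hi -> 0 < f t) /\
    (forall t, a <= t < hi -> derivable_pt_lim f t (odeF k1 delta g t (f t))) /\
    (forall s t, a <= s <= hi -> a <= t <= hi -> Rabs (f s - f t) <= B * Rabs (s - t))).
  { intros a. destruct (Rlt_dec lo a) as [H1|H1]; [destruct (Rlt_dec a hi) as [H2|H2]|].
    - destruct (exist_a lo hi k1 delta Y0 g a Hlo H1 H2 ltac:(unfold k1; lra) hdelta HY0 Hgc Hgb) as [f Hf].
      exists f. intros _. exact Hf.
    - exists (fun _ => 0). intros H; lra.
    - exists (fun _ => 0). intros H; lra. }
  set (sol := fun a => proj1_sig (constructive_indefinite_description _ (Hex a))).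
  assert (Hsol : forall a, lo < a < hi ->
    exists B, 0 <= B /\ sol a hi = Y0 /\ (forall t, a <= t <= hi -> 0 < sol a t) /\
    (forall t, a <= t < hi -> derivable_pt_lim (sol a) t (odeF k1 delta g t (sol a t))) /\
    (forall s t, a <= s <= hi -> a <= t <= hi -> Rabs (sol a s - sol a t) <= B * Rabs (s - t))).
  { intros a Ha. exact (proj2_sig (constructive_indefinite_description _ (Hex a)) Ha). }
  assert (Hsoll : forall a, lo < a < hi -> forall e, 0 < e -> exists eta, 0 < eta /\
     forall s, a <= s < hi -> hi - s < eta -> Rabs (sol a s - Y0) < e).
  { intros a Ha e He. destruct (Hsol a Ha) as [B [HB [Hh [_ [_ Hl]]]]].
    exists (e / (B + 1)). split; [apply Rdiv_lt_0_compat; lra|].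
    intros s Hs Hse. rewrite <- Hh. eapply Rle_lt_trans; [apply Hl; lra|].
    rewrite Rabs_left by lra.
    assert (Hee : (B + 1) * (e / (B + 1)) = e) by (field; lra).
    assert (0 < e / (B+1)) by (apply Rdiv_lt_0_compat; lra). nra. }
  assert (Hgu : forall c u, lo < c -> c <= u < hi -> 0 < u /\ 0 <= g u).
  { intros c u Hc Hu. split; [lra|]. left; apply Hgpos; lra. }
  assert (Heqsol : forall a1 a2 v, lo < a1 < hi -> lo < a2 < hi -> a1 <= v <= hi -> a2 <= v <= hi ->
     sol a1 v = sol a2 v).
  { intros a1 a2 v H1 H2 H3 H4.
    destruct (Hsol a1 H1) as [B1 [_ [Hh1 [Hp1 [Hd1 _]]]]].
    destruct (Hsol a2 H2) as [B2 [_ [Hh2 [Hp2 [Hd2 _]]]]].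
    apply (uniq k1 delta Y0 hi v g); try lra.
    - intros u Hu. apply (Hgu v); lra.
    - intros t Ht. apply Hd1; lra.
    - intros t Ht. apply Hd2; lra.
    - intros t Ht. apply Hp1; lra.
    - intros t Ht. apply Hp2; lra.
    - intros e He. destruct (Hsoll a1 H1 e He) as [eta [Heta Hs]]. exists eta. split; auto.
      intros s Hs1 Hs2. apply Hs; lra.
    - intros e He. destruct (Hsoll a2 H2 e He) as [eta [Heta Hs]]. exists eta. split; auto.
      intros s Hs1 Hs2. apply Hs; lra. }
  set (psi := fun u => sol ((lo + u) / 2) u).
  assert (Hpsi : forall a v, lo < a < hi -> a <= v <= hi -> psi v = sol a v).
  { intros a v Ha Hv. unfold psi. apply Heqsol; lra. }
  assert (Hpsid : forall u, lo < u < hi -> derivable_pt_lim psi u (odeF k1 delta g u (psi u))).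
  { intros u Hu. set (a0 := (lo + u) / 2).
    destruct (Hsol a0 ltac:(unfold a0; lra)) as [B [_ [_ [_ [Hd _]]]]].
    specialize (Hd u ltac:(unfold a0; lra)).
    apply is_derive_Reals. apply is_derive_Reals in Hd.
    apply (is_derive_ext_loc (sol a0)).
    - apply (locally_interval _ u a0 hi); simpl; try (unfold a0; lra).
      intros y Hy1 Hy2. simpl in Hy1, Hy2. symmetry. apply Hpsi; unfold a0 in *; lra.
    - exact Hd. }
  assert (Hpsihi : psi hi = Y0).
  { unfold psi. destruct (Hsol ((lo + hi)/2) ltac:(lra)) as [B [_ [Hh _]]]. exact Hh. }
  assert (Hpsil : forall e, 0 < e -> exists eta, 0 < eta /\
     forall s, lo < s < hi -> hi - s < eta -> Rabs (psi s - Y0) < e).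
  { intros e He. destruct (Hsoll ((lo+hi)/2) ltac:(lra) e He) as [eta [Heta Hs]].
    exists (Rmin eta ((hi - lo)/2)). split; [apply Rmin_pos; lra|].
    intros s Hs1 Hs2. pose proof (Rmin_l eta ((hi - lo)/2)). pose proof (Rmin_r eta ((hi - lo)/2)).
    rewrite (Hpsi ((lo + hi)/2)) by lra. apply Hs; lra. }
  assert (Hpsipos : forall u, lo < u <= hi -> 0 < psi u).
  { intros u Hu. unfold psi. destruct (Hsol ((lo + u)/2) ltac:(lra)) as [B [_ [_ [Hp _]]]]. apply Hp; lra. }
  assert (Hode : forall f u d, 0 < u -> f u <> 0 ->
     d = odeF k1 delta g u (f u) <->
     d * f u - (gamma + delta) / u * f u
       = - delta * ((beta * (St + Et + It + Rt) - beta * St * exp ((beta / gamma) * Rt) * u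
                     + gamma * ln u) / u)).
  { intros f u d Hu Hf. unfold odeF, g, gg, k1. split.
    - intros ->. field. split; lra.
    - intros H. apply (Rmult_eq_reg_r (f u)); [|auto].
      set (X := beta * (St + Et + It + Rt) - beta * St * exp (beta / gamma * Rt) * u + gamma * ln u) in *.
      assert (H' : d * f u = (gamma + delta) / u * f u - delta * (X / u)) by lra.
      rewrite H'. field. split; lra. }
  exists psi. split.
  - unfold ivp_solution. cbv zeta. fold lo hi.
    split; [|split; [|split]].
    + intros u Hu. exists (odeF k1 delta g u (psi u)). split; [apply Hpsid; auto|].
      apply Hode; [lra| apply Rgt_not_eq, Hpsipos; lra| auto].
    + intros e He. destruct (Hpsil e He) as [eta [Heta Hs]]. exists eta. split; [lra|].
      intros x [Hx1 Hx2]. simpl in Hx2 |- *. unfold R_dist in *.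
      destruct (Rle_lt_or_eq_dec x hi (proj2 Hx1)) as [Hxh|Hxh].
      * rewrite Hpsihi. apply Hs; [lra|]. rewrite Rabs_left in Hx2 by lra. lra.
      * subst x. rewrite Rminus_diag, Rabs_R0. lra.
    + exact Hpsihi.
    + intros u Hu. apply Hpsipos; auto.
  - intros phi Hphi u Hu. unfold ivp_solution in Hphi. cbv zeta in Hphi. fold lo hi in Hphi, Hu.
    destruct Hphi as [Phode [Phlim [Phhi Phpos]]].
    apply (uniq k1 delta Y0 hi u g); try lra.
    + intros v Hv. apply (Hgu u); lra.
    + intros t Ht. destruct (Phode t ltac:(lra)) as [d [Hd Hde]].
      assert (Hdd : d = odeF k1 delta g t (phi t)).
      { apply Hode; [lra| apply Rgt_not_eq, Phpos; lra| exact Hde]. }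
      rewrite <- Hdd. exact Hd.
    + intros t Ht. apply Hpsid; lra.
    + intros t Ht. apply Phpos; lra.
    + intros t Ht. apply Hpsipos; lra.
    + exact Phhi.
    + intros e He. destruct (Phlim e He) as [alp [Halp Hal]]. exists alp. split; [lra|].
      intros s Hs1 Hs2. change Y0 with (beta * It). rewrite <- Phhi. apply (Hal s). split; [lra|].
      simpl. unfold R_dist. rewrite Rabs_left by lra. lra.
    + intros e He. destruct (Hpsil e He) as [eta [Heta Hs]]. exists eta. split; auto.
      intros s Hs1 Hs2. apply Hs; lra.
Qed.
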